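(* Let $\gamma=(\gamma_1,\dots,\gamma_b)$ be a parallel map on $V=V_1\oplus\cdots\oplus V_b$, $V_i\cong(\mathbb F_2)^m$, with $0\gamma=0$. Let $U$ be a subspace of $V$ of dimension $n-1$. Suppose that for every $i\notin J_U$, $\gamma_i$ is differentially $2^r$-uniform with $r<m$ and strongly $(r-1)$-anti-invariant, and for every $j\in J_U$, $\gamma_j$ is differentially $2^r$-uniform with $r<m-1$ and strongly $r$-anti-invariant. If $\gamma$ maps $\mathcal L(W)$ onto a non-trivial partition $\mathcal{LA}_U(W_1|W_2)$, then $W,W_1,W_2$ are walls and $W=W_1=W_2$; in particular $\mathcal{LA}_U(W_1|W_2)$ is linear.
   Context: Let $m,b>1$, $n=mb$, $V=(\mathbb F_2)^n=V_1\oplus\cdots\oplus V_b$, $V_i\cong(\mathbb F_2)^m$. Permutations act on the right. A parallel map is $\gamma\in\mathrm{Sym}(V)$ with $(v_1\oplus\cdots\oplus v_b)\gamma=v_1\gamma_1\oplus\cdots\oplus v_b\gamma_b$, $\gamma_i\in\mathrm{Sym}(V_i)$. A wall is $\bigoplus_{i\in I}V_i$ with $\emptyset\ne I\subsetneq\{1,\dots,b\}$. For a subspace $U$ of dimension $n-1$, $J_U=\{j: V_j\cap U\subsetneq V_j\}$. $f:(\mathbb F_2)^m\to(\mathbb F_2)^m$ is differentially $\delta$-uniform if $\delta=\max_{a\ne0,b}|\{x:f(x+a)+f(x)=b\}|$; for $f(0)=0$, $f$ is strongly $s$-anti-invariant if for all subspaces $U',W'$ of $(\mathbb F_2)^m$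 with $f(U')=W'$, either $\dim U'=\dim W'<m-s$ or $U'=W'=(\mathbb F_2)^m$. A permutation maps a partition $\mathcal A$ onto $\mathcal B$ if it sends the blocks of $\mathcal A$ exactly onto the blocks of $\mathcal B$; trivial partitions are the singleton partition and $\{V\}$. $\mathcal L(W)=\{W+v:v\in V\}$. For subspaces $W_1,W_2\subseteq U$, $\mathcal{LA}_U(W_1|W_2)=\{W_1+v:v\in U\}\cup\{(W_2+\bar v)+v:v\in U\}$ for any $\bar v\in V\setminus U$. *)

(* Defs.v *)
From HB Require Import structures.
From mathcomp Require Import all_boot all_order all_algebra.
From mathcomp Require Import fingroup perm.
Set Implicit Arguments. Unset Strict Implicit. Unset Printing Implicit Defensive.
Import GRing.Theory.
Local Open Scope ring_scope.

Definition blk (m : nat) := 'rV['F_2]_m.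
Definition Vsp (m b : nat) := {ffun 'I_b -> 'rV['F_2]_m}.

Definition parmap (m b : nat) (g : 'I_b -> {perm 'rV['F_2]_m})
  (v : {ffun 'I_b -> 'rV['F_2]_m}) : {ffun 'I_b -> 'rV['F_2]_m} :=
  [ffun i => g i (v i)].

Definition block (m b : nat) (j : 'I_b) : {set {ffun 'I_b -> 'rV['F_2]_m}} :=
  [set v : {ffun 'I_b -> 'rV['F_2]_m} | [forall k, (k != j) ==> (v k == 0)]].

Definition JU (m b : nat) (U : {vspace {ffun 'I_b -> 'rV['F_2]_m}}) : {set 'I_b} :=
  [set j | (block m j :&: [set x | x \in U]) \proper block m j].

Definition is_wall (m b : nat) (W : {vspace {ffun 'I_b -> 'rV['F_2]_m}}) : Prop :=
  exists I : {set 'I_b}, [/\ I != set0, I != setT &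
    forall v : {ffun 'I_b -> 'rV['F_2]_m},
      (v \in W) = [forall k, (k \notin I) ==> (v k == 0)]].

Notation VV m b := {ffun 'I_b -> 'rV['F_2]_m}.

Definition coset (m b : nat) (W : {vspace VV m b}) (v : VV m b) : {set VV m b} :=
  [set w + v | w : VV m b in W].

Definition Lpart (m b : nat) (W : {vspace VV m b}) : {set {set VV m b}} :=
  [set coset W v | v in [set: VV m b]].

(* LA_U(W1|W2) = { W1 + v : v in U } \cup { (W2 + vbar) + v : v in U },
   for a (fixed, arbitrary) vbar outside U. *)
Definition LApart (m b : nat) (U W1 W2 : {vspace VV m b}) (vbar : VV m b)
  : {set {set VV m b}} :=
  [set coset W1 v | v in U] :|: [set coset W2 (vbar + v) | v in U].

Definition trivial_part (m b : nat) (P : {set {set VV m b}}) : Prop :=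
  P = [set [set x] | x in [set: VV m b]] \/ P = [set [set: VV m b]].

Definition maps_onto (T : finType) (f : T -> T) (A B : {set {set T}}) : Prop :=
  [set f @: X | X : {set T} in A] = B.

Definition diff_unif (m : nat) (f : 'rV['F_2]_m -> 'rV['F_2]_m) : nat :=
  (\max_(a : 'rV['F_2]_m | a != 0%R) \max_(c : 'rV['F_2]_m)
     #|[set x : 'rV['F_2]_m | (f (x + a) + f x == c)%R]|)%N.

Definition diff_uniform (m : nat) (f : 'rV['F_2]_m -> 'rV['F_2]_m) (delta : nat)
  : Prop := diff_unif f = delta.

Definition strongly_anti_invariant (m : nat) (f : 'rV['F_2]_m -> 'rV['F_2]_m)
  (s : nat) : Prop :=
  forall U' W' : {vspace 'rV['F_2]_m},
    f @: [set x | x \in U'] = [set x | x \in W'] ->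
    ((\dim U' = \dim W') /\ (\dim U' < m - s)%N) \/ (U' = fullv /\ W' = fullv).

(* Main.v *)
Require Import Defs.
From HB Require Import structures.
From mathcomp Require Import all_boot all_order all_algebra.
From mathcomp Require Import fingroup perm.
From mathcomp Require Import all_field zify.
Import GRing.Theory.
Local Open Scope ring_scope.

Lemma addxx2 {V : lmodType 'F_2} (x : V) : x + x = 0.
Proof.
have -> : x + x = (1 + 1 : 'F_2) *: x by rewrite scalerDl scale1r.
have -> : (1 + 1 : 'F_2) = 0 by apply/val_inj.
by rewrite scale0r.
Qed.

Lemma oppF2 {V : lmodType 'F_2} (x : V) : - x = x.
Proof. by apply/eqP; rewrite eq_sym -addr_eq0 addxx2. Qed.

Lemma F2cases (a : 'F_2) : a = 0 \/ a = 1.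
Proof. case: a => [[|[|]]] //= i; [left|right]; exact/val_inj. Qed.

Definition emb (m b : nat) (j : 'I_b) (x : 'rV['F_2]_m) : VV m b :=
  [ffun k => if k == j then x else 0].
Arguments emb {m b}.

Fact emb_lin m b j : linear (@emb m b j).
Proof.
move=> a x y; apply/ffunP => k; rewrite !ffunE.
by case: (k == j); rewrite ?scaler0 ?addr0.
Qed.

HB.instance Definition _ m b j :=
  GRing.isLinear.Build 'F_2 _ _ _ (@emb m b j) (@emb_lin m b j).

Lemma parmapE m b g v i : @parmap m b g v i = g i (v i).
Proof. by rewrite ffunE. Qed.

Lemma parmap_inj m b g : injective (@parmap m b g).
Proof.
move=> x y /ffunP H; apply/ffunP => i; move: (H i); rewrite !ffunE.
exact: perm_inj.
Qed.

Definition parinv m b (g : 'I_b -> {perm 'rV['F_2]_m}) (y : VV m b) : VV m b :=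
  [ffun i => (g i)^-1%g (y i)].
Arguments parinv {m b}.

Lemma parinvK m b g y : @parmap m b g (parinv g y) = y.
Proof. by apply/ffunP => i; rewrite !ffunE permKV. Qed.

Lemma g0 m b g i : @parmap m b g 0 = 0 -> g i 0 = 0.
Proof. by move/ffunP/(_ i); rewrite !ffunE. Qed.

Lemma parmap_emb m b g j x : @parmap m b g 0 = 0 ->
  parmap g (emb j x) = emb j (g j x).
Proof.
move=> H; apply/ffunP => k; rewrite !ffunE.
by case: eqP => [->|_] //; rewrite (@g0 m b g k H).
Qed.

Lemma mem_coset m b (W : {vspace VV m b}) v y : (y \in coset W v) = (y + v \in W).
Proof.
apply/imsetP/idP => [[w Hw ->]|H].
  by rewrite -addrA addxx2 addr0.
by exists (y + v) => //; rewrite -addrA addxx2 addr0.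
Qed.

Lemma dimVV m b : \dim (fullv : {vspace VV m b}) = (m * b)%N.
Proof. by rewrite dimvf /dim /= dim_matrix card_ord mulnC; congr muln; exact: mul1n. Qed.

Lemma card_rV m : #|{: 'rV['F_2]_m}| = (2 ^ m)%N.
Proof. by rewrite card_mx card_Fp // mul1n. Qed.

Lemma du_bound m (f : 'rV['F_2]_m -> 'rV['F_2]_m) a c : a != 0 ->
  leq #|[set x | f (x + a) + f x == c]| (diff_unif f).
Proof.
move=> Ha; rewrite /diff_unif.
rewrite (bigD1 a) //=; apply: leq_trans (leq_maxl _ _).
by rewrite (bigD1 c) //=; apply: leq_maxl.
Qed.


Lemma addKF2 {V : lmodType 'F_2} (x y : V) : x + y + y = x.
Proof. by rewrite -addrA addxx2 addr0. Qed.

Lemma addACAF2 {V : lmodType 'F_2} (x y v : V) : (x + v) + (y + v) = x + y.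
Proof. by rewrite addrACA addxx2 addr0. Qed.

Lemma LA_same m b (U W1 W2 : {vspace VV m b}) vbar B y y' :
  (W1 <= U)%VS -> (W2 <= U)%VS -> vbar \notin U ->
  B \in LApart U W1 W2 vbar -> y \in B -> y' \in B ->
  [/\ y \in U, y' \in U & y + y' \in W1] \/
  [/\ y \notin U, y' \notin U & y + y' \in W2].
Proof.
move=> /subvP H1 /subvP H2 Hv /setUP [] /imsetP [v Hu ->];
  rewrite !mem_coset => Hy Hy'.
- left; split.
  + by rewrite -(addKF2 y v) memvD // H1.
  + by rewrite -(addKF2 y' v) memvD // H1.
  + by rewrite -(addACAF2 y y' v) memvD.
- right; split.
  + apply: contra Hv => Hy0.
    have -> : vbar = (y + (vbar + v)) + y + v by rewrite [y + _]addrC !addKF2.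
    by apply: memvD => //; apply: memvD => //; apply: H2.
  + apply: contra Hv => Hy0.
    have -> : vbar = (y' + (vbar + v)) + y' + v by rewrite [y' + _]addrC !addKF2.
    by apply: memvD => //; apply: memvD => //; apply: H2.
  + by rewrite -(addACAF2 y y' (vbar + v)) memvD.
Qed.

Lemma hyperplane {m b} {U : {vspace VV m b}} {x0 x} : (0 < m * b)%N ->
  \dim U = (m * b).-1 -> x0 \notin U -> x \notin U -> x + x0 \in U.
Proof.
move=> Hn HU Hx0 Hx.
have nz : x0 != 0 by apply: contraNneq Hx0 => ->; rewrite mem0v.
have Hcap : \dim (U :&: <[x0]>%VS) = 0%N.
  have := dimvS (capvSr U <[x0]>%VS); rewrite dim_vline nz.
  case: (ltngtP (\dim (U :&: <[x0]>%VS)) 1) => // [/ltnSE|]; first by rewrite leqn0 => /eqP.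
  move=> Hd _; have : (U :&: <[x0]>%VS)%VS == <[x0]>%VS.
    by rewrite -(dimv_leqif_eq (capvSr U <[x0]>%VS)) Hd dim_vline nz.
  move/eqP => E; have : x0 \in (U :&: <[x0]>%VS)%VS by rewrite E memv_line.
  by rewrite memv_cap (negbTE Hx0).
have Hfull : (U + <[x0]>%VS)%VS = fullv.
  apply/eqP; rewrite eqEdim subvf /=.
  have := dimv_sum_cap U <[x0]>%VS; rewrite Hcap addn0 dim_vline nz dimVV HU => ->.
  by rewrite addn1 prednK.
have Hm : x \in (U + <[x0]>%VS)%VS by rewrite Hfull memvf.
move: Hx; case/memv_addP: Hm => u Hu [l /vlineP [a ->] ->].
case: (F2cases a) => ->; first by rewrite scale0r addr0 Hu.
by rewrite scale1r addKF2.
Qed.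


Lemma R1 {m b} {g : 'I_b -> {perm 'rV['F_2]_m}} {U W W1 W2 : {vspace VV m b}} {vbar} :
  (W1 <= U)%VS -> (W2 <= U)%VS -> vbar \notin U ->
  maps_onto (parmap g) (Lpart W) (LApart U W1 W2 vbar) ->
  forall x x', x + x' \in W ->
  [/\ parmap g x \in U, parmap g x' \in U & parmap g x + parmap g x' \in W1] \/
  [/\ parmap g x \notin U, parmap g x' \notin U & parmap g x + parmap g x' \in W2].
Proof.
move=> H1 H2 Hv Hmap x x' Hxx.
apply: (@LA_same m b U W1 W2 vbar (parmap g @: coset W x)) => //.
- rewrite -Hmap; apply/imsetP; exists (coset W x) => //.
  by apply/imsetP; exists x; rewrite ?inE.
- by apply: imset_f; rewrite mem_coset addxx2 mem0v.
- by apply: imset_f; rewrite mem_coset addrC.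
Qed.

Lemma R3 {m b} {g : 'I_b -> {perm 'rV['F_2]_m}} {U W W1 W2 : {vspace VV m b}} {vbar} :
  parmap g 0 = 0 ->
  (W1 <= U)%VS -> (W2 <= U)%VS -> vbar \notin U ->
  maps_onto (parmap g) (Lpart W) (LApart U W1 W2 vbar) ->
  forall z, z \in W -> parmap g z \in W1.
Proof.
move=> Hg H1 H2 Hv Hmap z Hz.
have : z + 0 \in W by rewrite addr0.
case/(R1 H1 H2 Hv Hmap); rewrite Hg; first by case=> _ _; rewrite addr0.
by case=> _; rewrite mem0v.
Qed.

Lemma R2 {m b} {g : 'I_b -> {perm 'rV['F_2]_m}} {U W W1 W2 : {vspace VV m b}} {vbar} :
  parmap g 0 = 0 ->
  maps_onto (parmap g) (Lpart W) (LApart U W1 W2 vbar) ->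
  forall z, parmap g z \in W1 -> z \in W.
Proof.
move=> Hg Hmap z Hz.
have : coset W1 0 \in LApart U W1 W2 vbar.
  by apply/setUP; left; apply/imsetP; exists 0; rewrite ?mem0v.
rewrite -Hmap => /imsetP [X /imsetP [v _ ->] EX].
have : (0 : VV m b) \in coset W1 0 by rewrite mem_coset addr0 mem0v.
rewrite EX => /imsetP [u Hu E0].
have u0 : u = 0 by apply: (@parmap_inj m b g); rewrite -E0 Hg.
move: Hu; rewrite u0 mem_coset add0r => Hv.
have : parmap g z \in coset W1 0 by rewrite mem_coset addr0.
rewrite EX => /imsetP [u' Hu' /parmap_inj Ez].
move: Hu'; rewrite -Ez mem_coset => Hzv.
by rewrite -(addKF2 z v) memvD.
Qed.


Lemma block_emb {m b} j (v : VV m b) : v \in block m j -> v = emb j (v j).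
Proof.
rewrite inE => /forallP H; apply/ffunP => k; rewrite /emb ffunE.
by case: eqP => [->|/eqP nk] //; apply/eqP; have := H k; rewrite nk.
Qed.

Lemma emb_block {m b} j (x : 'rV['F_2]_m) : emb j x \in block m (b:=b) j.
Proof.
rewrite inE; apply/forallP => k; rewrite /emb ffunE. by apply/implyP => /negbTE ->.
Qed.

Lemma notJ_all {m b} (U : {vspace VV m b}) j : j \notin JU U -> forall x, emb j x \in U.
Proof.
rewrite inE properE subsetIl /= negbK => /subsetP H x.
by have := H _ (emb_block j x); rewrite !inE => /andP [].
Qed.

Lemma J_ex {m b} (U : {vspace VV m b}) j : j \in JU U -> exists x, emb j x \notin U.
Proof.
rewrite inE properE subsetIl /= => /subsetPn [v Hv Hn].
exists (v j); rewrite -(@block_emb m b j v Hv); apply: contra Hn => Hu.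
by rewrite !inE Hu andbT; rewrite inE in Hv.
Qed.

Lemma cardH {m b} (U : {vspace VV m b}) j : (0 < m * b)%N -> \dim U = (m * b).-1 ->
  (2 ^ m <= 2 * #|[set x : 'rV['F_2]_m | emb j x \in U]|)%N.
Proof.
move=> Hn HU; set H := [set x | _].
case: (pickP [pred x | emb j x \notin U]) => [x0 /= Hx0 | none].
  have Hsub : (fun x => x + x0) @: (~: H) \subset H.
    apply/subsetP => y /imsetP [x]; rewrite !inE => Hx ->.
    by rewrite linearD /= (hyperplane Hn HU Hx0 Hx).
  have := subset_leq_card Hsub; rewrite card_imset; last exact: addIr.
  have := cardsC H; rewrite card_rV => <- L; by rewrite mul2n -addnn leq_add2l.
have -> : H = setT by apply/setP => x; rewrite !inE; have := none x; rewrite /= => /negbFE.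
by rewrite cardsT card_rV; lia.
Qed.

Lemma cardH_notJ {m b} (U : {vspace VV m b}) j : j \notin JU U ->
  #|[set x : 'rV['F_2]_m | emb j x \in U]| = (2 ^ m)%N.
Proof.
move=> Hj; have -> : [set x : 'rV['F_2]_m | emb j x \in U] = setT.
  by apply/setP => x; rewrite !inE notJ_all.
by rewrite cardsT card_rV.
Qed.

Lemma arith_notJ m r k X : (2 ^ m <= X)%N -> (X <= (2 ^ k - 1) * 2 ^ r)%N ->
  (k < m - r.-1)%N -> False.
Proof.
move=> H1 H2 H3.
have H4 : (k + r <= m)%N by case: r H2 H3 => [|r] /=; lia.
have H5 : (2 ^ (k + r) <= 2 ^ m)%N by rewrite leq_exp2l.
have P1 : (0 < 2 ^ k)%N by rewrite expn_gt0.
have P2 : (0 < 2 ^ r)%N by rewrite expn_gt0.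
rewrite expnD in H5; rewrite mulnBl mul1n in H2; lia.
Qed.

Lemma arith_J m r k X : (2 ^ m <= 2 * X)%N -> (X <= (2 ^ k - 1) * 2 ^ r)%N ->
  (k < m - r)%N -> False.
Proof.
move=> H1 H2 H3.
have H4 : ((k + r).+1 <= m)%N by lia.
have H5 : (2 ^ (k + r).+1 <= 2 ^ m)%N by rewrite leq_exp2l.
have P1 : (0 < 2 ^ k)%N by rewrite expn_gt0.
have P2 : (0 < 2 ^ r)%N by rewrite expn_gt0.
rewrite expnS expnD in H5; rewrite mulnBl mul1n in H2; lia.
Qed.


Lemma memPre {m b} j (W : {vspace VV m b}) x :
  (x \in (linfun (emb j) @^-1: W)%VS) = (emb j x \in W).
Proof. by rewrite -memv_preim lfunE. Qed.

Lemma blockA {m b} {g : 'I_b -> {perm 'rV['F_2]_m}} {U W W1 W2 : {vspace VV m b}} {vbar}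
  (s r : nat) j :
  parmap g 0 = 0 -> (W1 <= U)%VS -> (W2 <= U)%VS -> vbar \notin U ->
  maps_onto (parmap g) (Lpart W) (LApart U W1 W2 vbar) ->
  diff_unif (g j) = (2 ^ r)%N -> strongly_anti_invariant (g j) s ->
  (forall k, (#|g j @^-1: [set x | emb j x \in U]| <= (2 ^ k - 1) * 2 ^ r)%N ->
     (k < m - s)%N -> False) ->
  (forall x, emb j x \in W -> x = 0) \/ (forall x, emb j x \in W).
Proof.
move=> Hg H1 H2 Hv Hmap Hdu Hanti Hcount.
set Y := (linfun (emb j) @^-1: W)%VS.
set Y1 := (linfun (emb j) @^-1: W1)%VS.
have Himg : (g j) @: [set x | x \in Y] = [set x | x \in Y1].
  apply/setP => y; rewrite inE; apply/imsetP/idP.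
    move=> [x]; rewrite inE memPre => Hx ->.
    by rewrite memPre -(@parmap_emb m b g j x Hg); apply: (R3 Hg H1 H2 Hv Hmap).
  rewrite memPre => Hy; exists (((g j)^-1)%g y); last by rewrite permKV.
  rewrite inE memPre; apply: (R2 Hg Hmap).
  by rewrite (@parmap_emb m b g j _ Hg) permKV.
case: (pickP [pred e | (e \in Y) && (e != 0)]) => [e /andP [He enz] | none]; last first.
  left => x Hx; have := none x; rewrite /= memPre Hx /= => /negbFE/eqP.
  done.
right.
case: (Hanti _ _ Himg) => [[Hdim Hlt]|[HY _]]; last first.
  by move=> x; rewrite -memPre -/Y HY memvf.
exfalso; apply: (Hcount (\dim Y)) Hlt.
set X := (g j) @^-1: _.
set C := [set y | y \in Y1] :\ 0.
have HC : #|C| = (2 ^ \dim Y - 1)%N.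
  have := cardsD1 0 [set y | y \in Y1]; rewrite inE mem0v cardsE card_vspace card_Fp // Hdim.
  by rewrite -/C => ->; rewrite add1n subn1.
have Hclaim : forall x, x \in X -> (g j) (x + e) + (g j) x \in C.
  move=> x; rewrite !inE => Hx.
  have He' : emb j (x + e) + emb j x \in W.
    by rewrite -linearD /= [x + e]addrC addKF2 -memPre.
  case: (R1 H1 H2 Hv Hmap _ _ He'); rewrite !(@parmap_emb m b g j _ Hg); last first.
    by case=> _; rewrite Hx.
  case=> _ _; rewrite -linearD /= -memPre => ->; rewrite andbT.
  apply: contra enz => /eqP E.
  have E2 : (g j) (x + e) = (g j) x by rewrite -[(g j) x]oppF2; apply/eqP; rewrite -addr_eq0 E.
  have := perm_inj E2 => E3.
  by rewrite -[e](addKF2 _ x) [e + x]addrC E3 addxx2.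
rewrite -HC -sum1_card (partition_big (fun x => (g j) (x + e) + (g j) x) (mem C)) /=; last first.
  by move=> x Hx; apply: Hclaim.
rewrite -sum_nat_const; apply: leq_sum => c Hc.
rewrite sum1dep_card -Hdu; apply: (leq_trans _ (@du_bound m (g j) e c enz)).
apply: subset_leq_card; apply/subsetP => x; rewrite !inE => /andP [_ ->]; done.
Qed.

Lemma blockB {m b} {g : 'I_b -> {perm 'rV['F_2]_m}} {U W W1 W2 : {vspace VV m b}} {vbar}
  (r : nat) j :
  parmap g 0 = 0 -> (W1 <= U)%VS -> (W2 <= U)%VS -> vbar \notin U ->
  maps_onto (parmap g) (Lpart W) (LApart U W1 W2 vbar) ->
  diff_unif (g j) = (2 ^ r)%N ->
  (2 ^ r < #|g j @^-1: [set x | emb j x \in U]|)%N ->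
  (forall x, emb j x \in W -> x = 0) -> forall w, w \in W -> w j = 0.
Proof.
move=> Hg H1 H2 Hv Hmap Hdu Hbig HA w Hw.
apply/eqP/negPn/negP => ynz.
set y := w j in ynz.
suff Hsub : g j @^-1: [set x | emb j x \in U] \subset [set c | g j (c + y) + g j c == g j y].
  have := leq_trans (subset_leq_card Hsub) (@du_bound m (g j) y (g j y) ynz).
  by rewrite Hdu leqNgt Hbig.
apply/subsetP => c; rewrite !inE => Hc.
have Hs : (w + emb j c) + emb j c \in W by rewrite addKF2.
case: (R1 H1 H2 Hv Hmap _ _ Hs); rewrite (@parmap_emb m b g j _ Hg); last first.
  by case=> _; rewrite Hc.
case=> _ _ Ha.
have Hb := R3 Hg H1 H2 Hv Hmap _ Hw.
have Hd := memvD Ha Hb.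
set z := g j (c + y) + g j c + g j y.
have E : parmap g (w + emb j c) + emb j (g j c) + parmap g w = emb j z.
  apply/ffunP => k; rewrite /emb /z !ffunE.
  case: eqP => [->|_]; first by rewrite [w j + c]addrC.
  by rewrite addr0 addr0 addxx2.
rewrite E in Hd.
have Hz : emb j (((g j)^-1)%g z) \in W.
  by apply: (R2 Hg Hmap); rewrite (@parmap_emb m b g j _ Hg) permKV.
have z0 : z = 0.
  by rewrite -(permKV (g j) z) (HA _ Hz) (@g0 m b g j Hg).
by move: z0; rewrite /z => /eqP; rewrite addr_eq0 oppF2.
Qed.


Lemma eqF2 {V : lmodType 'F_2} (x y : V) : (x + y == 0) = (x == y).
Proof. by rewrite addr_eq0 oppF2. Qed.

Lemma memDr {m b} (W : {vspace VV m b}) v z : v \in W -> (z + v \in W) = (z \in W).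
Proof.
move=> Hv; apply/idP/idP => H; last exact: memvD.
by rewrite -(addKF2 z v) memvD.
Qed.

Lemma ffun_decomp {m b} (v : VV m b) : v = \sum_k emb k (v k).
Proof.
apply/ffunP => i; rewrite sum_ffunE (bigD1 i) //= big1 => [|k nk].
  by rewrite /emb ffunE eqxx addr0.
by rewrite /emb ffunE eq_sym (negbTE nk).
Qed.

Lemma add_ffunE {m b} (v w : VV m b) k : (v + w) k = v k + w k.
Proof. by rewrite ffunE. Qed.


Theorem corollary3p9 (m b : nat) (hm : (1 < m)%N) (hb : (1 < b)%N)
  (g : 'I_b -> {perm 'rV['F_2]_m}) (r : nat)
  (U W W1 W2 : {vspace VV m b}) (vbar : VV m b) :
  parmap g 0 = 0 ->
  \dim U = (m * b).-1 ->
  (W1 <= U)%VS -> (W2 <= U)%VS -> vbar \notin U ->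
  (forall i, i \notin JU U ->
     [/\ diff_uniform (g i) (2 ^ r), (r < m)%N &
         strongly_anti_invariant (g i) r.-1]) ->
  (forall j, j \in JU U ->
     [/\ diff_uniform (g j) (2 ^ r), (r < m.-1)%N &
         strongly_anti_invariant (g j) r]) ->
  maps_onto (parmap g) (Lpart W) (LApart U W1 W2 vbar) ->
  ~ trivial_part (LApart U W1 W2 vbar) ->
  [/\ is_wall W, is_wall W1, is_wall W2 & W = W1 /\ W1 = W2] /\
  LApart U W1 W2 vbar = Lpart W1.
Proof.
move=> Hg HU H1 H2 Hv HnotJ HJ Hmap Hntriv.
have Hn : (0 < m * b)%N by rewrite muln_gt0; apply/andP; split; lia.
set I := [set j : 'I_b | [forall x : 'rV['F_2]_m, emb j x \in W]].
have Hfacts : forall j, [/\ diff_unif (g j) = (2 ^ r)%N,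
    (2 ^ r < #|g j @^-1: [set x | emb j x \in U]|)%N &
    (j \notin I -> forall x, emb j x \in W -> x = 0)].
  move=> j; rewrite card_preimset; last exact: perm_inj.
  case: (boolP (j \in JU U)) => Hj.
  - case: (HJ j Hj) => Hdu Hr Hanti; split => //.
      rewrite -(ltn_pmul2l (_ : 0 < 2)%N) //; apply: (leq_trans _ (cardH U j Hn HU)).
      have : (2 ^ r.+2 <= 2 ^ m)%N by rewrite leq_exp2l //; lia.
      have : (0 < 2 ^ r)%N by rewrite expn_gt0.
      rewrite !expnS; lia.
    move=> HjI.
    case: (blockA r r j Hg H1 H2 Hv Hmap Hdu Hanti) => // [k Hk Hlt|Hall].
      apply: (@arith_J m r k _ _ Hk Hlt).
      by rewrite card_preimset; [exact: cardH | exact: perm_inj].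
    by case/negP: HjI; rewrite inE; apply/forallP => x; apply: Hall.
  - case: (HnotJ j Hj) => Hdu Hr Hanti; split => //.
      by rewrite cardH_notJ // ltn_exp2l.
    move=> HjI.
    case: (blockA r.-1 r j Hg H1 H2 Hv Hmap Hdu Hanti) => // [k Hk Hlt|Hall].
      apply: (@arith_notJ m r k _ _ Hk Hlt).
      by rewrite card_preimset ?cardH_notJ //; exact: perm_inj.
    by case/negP: HjI; rewrite inE; apply/forallP => x; apply: Hall.
have HAB : forall j, j \notin I -> forall w, w \in W -> w j = 0.
  move=> j HjI; case: (Hfacts j) => Hdu Hbig HA.
  exact: (blockB r j Hg H1 H2 Hv Hmap Hdu Hbig (HA HjI)).
have Wchar : forall v, (v \in W) = [forall k, (k \notin I) ==> (v k == 0)].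
  move=> v; apply/idP/forallP => [Hw k|H].
    by apply/implyP => Hk; apply/eqP; exact: HAB k Hk v Hw.
  rewrite (ffun_decomp v); apply: rpred_sum => k _; case: (boolP (k \in I)) => Hk.
    by move: Hk; rewrite inE => /forallP.
  by have := H k; rewrite Hk /= => /eqP ->; rewrite linear0 mem0v.
have Pcoset : forall x, parmap g @: coset W x = coset W (parmap g x).
  move=> x; apply/setP => y; rewrite mem_coset Wchar; apply/imsetP/forallP.
  - move=> [u]; rewrite mem_coset Wchar => /forallP Hu -> k; apply/implyP => Hk.
    have := Hu k; rewrite Hk /= add_ffunE eqF2 => /eqP Euk.
    by rewrite add_ffunE !parmapE Euk eqF2.
  - move=> Hy; exists (parinv g y); last by rewrite parinvK.
    rewrite mem_coset Wchar; apply/forallP => k; apply/implyP => Hk.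
    have := Hy k; rewrite Hk /= add_ffunE eqF2 parmapE => /eqP E.
    by rewrite add_ffunE /parinv ffunE E permK eqF2.
have HP : LApart U W1 W2 vbar = Lpart W.
  rewrite -Hmap /Lpart; apply/setP => B; apply/imsetP/imsetP.
  - move=> [X /imsetP [v _ ->] ->].
    by exists (parmap g v); [rewrite inE | exact: Pcoset].
  - move=> [y _ ->]; exists (coset W (parinv g y)).
      by apply/imsetP; exists (parinv g y); rewrite ?inE.
    by rewrite Pcoset parinvK.
have HI0 : I != set0.
  apply/negP => /eqP HI; apply: Hntriv; left; rewrite HP /Lpart.
  apply: eq_imset => y; apply/setP => z; rewrite mem_coset Wchar inE.
  apply/forallP/eqP => [H|->]; last by move=> k; rewrite HI in_set0 /= add_ffunE addxx2.
  apply/ffunP => k; have := H k; rewrite HI in_set0 /= add_ffunE eqF2 => /eqP.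
  done.
have HIT : I != setT.
  apply/negP => /eqP HI; apply: Hntriv; right; rewrite HP /Lpart.
  apply/setP => B; rewrite inE; apply/imsetP/eqP => [[v _ ->]|->].
    by apply/setP => z; rewrite mem_coset Wchar inE; apply/forallP => k; rewrite HI inE.
  exists 0; rewrite ?inE //.
  by apply/esym/setP => z; rewrite mem_coset Wchar inE; apply/forallP => k; rewrite HI inE.
have HW : is_wall W by exists I; split.
have EW1 : W1 = W.
  have : coset W1 0 \in Lpart W.
    by rewrite -HP; apply/setUP; left; apply/imsetP; exists 0; rewrite ?mem0v.
  case/imsetP => v _ E.
  have Hv0 : v \in W.
    have : (0 : VV m b) \in coset W1 0 by rewrite mem_coset addr0 mem0v.
    by rewrite E mem_coset add0r.
  apply/vspaceP => z; have := @mem_coset m b W1 0 z; rewrite addr0 => <-.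
  by rewrite E mem_coset memDr.
have EW2 : W2 = W.
  have : coset W2 (vbar + 0) \in Lpart W.
    by rewrite -HP; apply/setUP; right; apply/imsetP; exists 0; rewrite ?mem0v.
  case/imsetP => v _ E.
  have Hv0 : vbar + v \in W.
    have : vbar \in coset W2 (vbar + 0) by rewrite mem_coset addr0 addxx2 mem0v.
    by rewrite E mem_coset.
  rewrite addr0 in E; apply/vspaceP => z; have := @mem_coset m b W2 vbar (z + vbar).
  rewrite addKF2 => <-.
  by rewrite E mem_coset -addrA memDr.
split; first by rewrite EW1 EW2.
by rewrite HP EW1.
Qed.
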